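(* Let $G=(V,E)$ be a connected graph with $V=\{1,\ldots,n\}$, $\mathbf{w}\colon E\to\{1,\ldots,N\}$, and let $\mathcal{T}$ be an elimination tree of $G$. Let $v$ be an internal node of $\mathcal{T}$ with children $u_1,\ldots,u_o$, and let $J'\subseteq \mathtt{tail}^+[v]$. Then $$Q_{[v]}(J')=\prod_{i\in[o]}P_{(u_i)}(J').$$
   Context: An elimination tree of $G=(V,E)$ is a rooted tree on vertex set $V$ such that for every edge $\{u,v\}\in E$ one of $u,v$ is an ancestor of the other. For a node $v$: $\mathtt{tree}[v]$ is the set of nodes of the subtree rooted at $v$ (including $v$), $\mathtt{tree}(v)=\mathtt{tree}[v]\setminus\{v\}$; $\mathtt{tail}[v]$ is the set of ancestors of $v$ including $v$, $\mathtt{tail}(v)=\mathtt{tail}[v]\setminus\{v\}$. For $W\subseteq V$ let $W^+=\{u,u+n\mid u\in W\}\subseteq[2n]$, and write $\mathtt{tree}^+[v]=(\mathtt{tree}[v])^+$ etc. For $U\subseteq V$, $\delta[U]=\{e\in E\mid e\cap U\neq\emptyset\}$. For $\mathbf{w}$ and $F\subseteq E$, $\mathbf{w}(F)=\sum_{e\in F}\mathbf{w}(e)$. Define $\mathtt{tpl}(W)=\{(E_1,E_2,L)\mid E_1,E_2\subseteq\delta[W],\ L\subseteq W,\ E_1\cap E_2=\emptyset\}$; $\mathtt{mon}(E_1,E_2,L)=x^{|E_1|}y^{|E_2|}z^{|L|}\omega^{\mathbf{w}(E_1\cup E_2)}\in\mathbb{Z}[x,y,z,\omega]$; for $I\subseteq[2n]$,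 $\mathtt{dsj}(I)$ is the set of triples $(E_1,E_2,L)$ such that $\{s,t\}\cap I=\emptyset$ for all $\{s,t\}\in E_1$, $\{s+n,t+n\}\cap I=\emptyset$ for all $\{s,t\}\in E_2$, and $L^+\cap I=\emptyset$. Iverson bracket $[p]$ is $1$ if $p$ holds and $0$ otherwise. For a node $v$ and $J\subseteq\mathtt{tail}^+(v)$, $$P_{(v)}(J)=\sum_{(E_1,E_2,L)\in\mathtt{tpl}(\mathtt{tree}[v])}\mathtt{mon}(E_1,E_2,L)\sum_{K\subseteq\mathtt{tree}^+[v]}(-1)^{|K|}\,[(E_1,E_2,L)\in\mathtt{dsj}(J\cup K)],$$ and for $J'\subseteq\mathtt{tail}^+[v]$, $$Q_{[v]}(J')=\sum_{(E_1,E_2,L)\in\mathtt{tpl}(\mathtt{tree}(v))}\mathtt{mon}(E_1,E_2,L)\sum_{K'\subseteq\mathtt{tree}^+(v)}(-1)^{|K'|}\,[(E_1,E_2,L)\in\mathtt{dsj}(J'\cup K')].$$ *)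

(* Defs.v *)
(* with multinomials for Z[x,y,z,omega] = {mpoly int[4]}. *)
From HB Require Import structures.
From mathcomp Require Import all_boot all_order all_algebra.
From mathcomp Require Import mpoly.
Set Implicit Arguments. Unset Strict Implicit. Unset Printing Implicit Defensive.
Import GRing.Theory.
Local Open Scope ring_scope.

(* Vertices V = {1..n} are represented by 'I_n (i.e. 0..n-1);
   [2n] is represented by 'I_(n+n), where u : 'I_n stands for u (lshift)
   and u+n stands for rshift n u. *)

Section Defs.
Variable n : nat.
Notation V := 'I_n.
Notation V2 := 'I_(n + n).

Definition simple_graph (E : {set {set V}}) : Prop :=
  forall e, e \in E -> #|e| = 2%N.

Definition adj (E : {set {set V}}) : rel V := fun a b => [set a; b] \in E.

Definition graph_connected (E : {set {set V}}) : Prop :=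
  forall a b : V, connect (adj E) a b.

Definition rooted_tree (p : V -> V) (r : V) : Prop :=
  p r = r /\ forall u : V, connect (frel p) u r.

Definition anc (p : V -> V) (a u : V) : bool := connect (frel p) u a.

Definition elimination_tree (E : {set {set V}}) (p : V -> V) (r : V) : Prop :=
  rooted_tree p r /\
  forall a b : V, [set a; b] \in E -> anc p a b || anc p b a.

Definition children (p : V -> V) (v : V) : {set V} :=
  [set u | (p u == v) && (u != v)].

Definition treec (p : V -> V) (v : V) : {set V} := [set u | anc p v u].
Definition treeo (p : V -> V) (v : V) : {set V} := treec p v :\ v.
Definition tailc (p : V -> V) (v : V) : {set V} := [set u | anc p u v].
Definition tailo (p : V -> V) (v : V) : {set V} := tailc p v :\ v.

Definition lsh (W : {set V}) : {set V2} := [set lshift n u | u in W].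
Definition rsh (W : {set V}) : {set V2} := [set rshift n u | u in W].
Definition plus (W : {set V}) : {set V2} := lsh W :|: rsh W.

Definition delta (E : {set {set V}}) (U : {set V}) : {set {set V}} :=
  [set e in E | e :&: U != set0].

Definition wsum (w : {set V} -> nat) (F : {set {set V}}) : nat :=
  (\sum_(e in F) w e)%N.

Definition vx : 'I_4 := @Ordinal 4 0 isT.
Definition vy : 'I_4 := @Ordinal 4 1 isT.
Definition vz : 'I_4 := @Ordinal 4 2 isT.
Definition vw : 'I_4 := @Ordinal 4 3 isT.

Definition mon (w : {set V} -> nat) (E1 E2 : {set {set V}}) (L : {set V})
  : {mpoly int[4]} :=
  'X_vx ^+ #|E1| * 'X_vy ^+ #|E2| * 'X_vz ^+ #|L| * 'X_vw ^+ wsum w (E1 :|: E2).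

Definition dsj (E1 E2 : {set {set V}}) (L : {set V}) (I : {set V2}) : bool :=
  [&& [forall e in E1, [disjoint lsh e & I]],
      [forall e in E2, [disjoint rsh e & I]] &
      [disjoint plus L & I]].

Definition Fsum (E : {set {set V}}) (w : {set V} -> nat)
  (W : {set V}) (T : {set V2}) (J : {set V2}) : {mpoly int[4]} :=
  \sum_(E1 in powerset (delta E W))
   \sum_(E2 in powerset (delta E W) | [disjoint E1 & E2])
   \sum_(L in powerset W)
     mon w E1 E2 L *
     \sum_(K in powerset T) (-1) ^+ #|K| * (dsj E1 E2 L (J :|: K))%:R.

Definition Pv E w p v J := Fsum E w (treec p v) (plus (treec p v)) J.
Definition Qv E w p v J := Fsum E w (treeo p v) (plus (treeo p v)) J.

End Defs.

(* Main.v *)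
Require Import Defs.
From HB Require Import structures.
From mathcomp Require Import all_boot all_order all_algebra.
From mathcomp Require Import mpoly.
From mathcomp Require Import ring.
Import GRing.Theory.
Local Open Scope ring_scope.

Module Aux.
Set Implicit Arguments. Unset Strict Implicit. Unset Printing Implicit Defensive.


Section Gen.
Variable T : finType.
Implicit Types A B C Y : {set T}.

Lemma disjP A B : reflect (forall x, x \in A -> x \in B -> False) [disjoint A & B].
Proof.
rewrite -setI_eq0; apply: (iffP eqP) => [H x xA xB|H].
  have : x \in A :&: B by rewrite inE xA xB.
  by rewrite H inE.
apply/setP => x; rewrite !inE; apply/negP => /andP [] ; exact: H.
Qed.

Lemma disjUr A B C : [disjoint A & B :|: C] = [disjoint A & B] && [disjoint A & C].
Proof. by rewrite -!setI_eq0 setIUr setU_eq0. Qed.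

Lemma disjUl A B C : [disjoint B :|: C & A] = [disjoint B & A] && [disjoint C & A].
Proof. by rewrite -!setI_eq0 setIUl setU_eq0. Qed.

Lemma sum_powU (R : nmodType) A B (f : {set T} -> R) : [disjoint A & B] ->
  \sum_(Y in powerset (A :|: B)) f Y =
  \sum_(Y1 in powerset A) \sum_(Y2 in powerset B) f (Y1 :|: Y2).
Proof.
move=> dAB; rewrite pair_big /=.
rewrite (reindex_onto (fun p => p.1 :|: p.2) (fun Y => (Y :&: A, Y :&: B))) /=.
  apply: eq_bigl => [[Y1 Y2]] /=; apply/idP/idP.
    by case/andP => _ /eqP [<- <-]; rewrite !powersetE !subsetIr.
  rewrite !powersetE => /andP [h1 h2]; rewrite setUSS //=.
  idtac.
  apply/eqP; congr pair; apply/setP => x; rewrite !inE;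
  (have H1 : (x \in Y1) ==> (x \in A) by apply/implyP/(subsetP h1));
  (have H2 : (x \in Y2) ==> (x \in B) by apply/implyP/(subsetP h2));
  (have H3 : ~~ ((x \in A) && (x \in B)) by apply/negP => /andP [] /(disjP _ _ dAB x));
  by move: H1 H2 H3; case: (x \in Y1); case: (x \in Y2); case: (x \in A); case: (x \in B).
move=> Y; rewrite powersetE => hY; rewrite -setIUr; exact/setIidPl.
Qed.

Lemma altsum (R : ringType) A : \sum_(K in powerset A) (-1) ^+ #|K| = (A == set0)%:R :> R.
Proof.
have [->|/set0Pn [x xA]] := eqVneq A set0.
  by rewrite powerset0 big_set1 cards0 expr0.
have -> : A = [set x] :|: (A :\ x) by rewrite setD1K.
rewrite sum_powU; last by rewrite disjoints1 !inE eqxx.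
have nz : ([set x] :|: (A :\ x) == set0) = false.
  by apply/negP => /eqP/setP/(_ x); rewrite !inE eqxx.
rewrite exchange_big /= big1 // => Y; rewrite powersetE => hY.
rewrite powerset1 big_setU1 /=; last first.
  by rewrite !inE; apply/negP => /eqP/setP/(_ x); rewrite !inE eqxx.
rewrite big_set1 set0U cardsU1.
have -> : x \notin Y by apply/negP => /(subsetP hY); rewrite !inE eqxx.
by rewrite (_ : (true + #|Y|)%N = #|Y|.+1) // exprS mulN1r addrN.
Qed.

End Gen.



Section S.
Variable n : nat.


Definition Sof (E1 E2 : {set {set 'I_n}}) (L : {set 'I_n}) : {set 'I_(n + n)} :=
  (\bigcup_(e in E1) lsh e) :|: (\bigcup_(e in E2) rsh e) :|: plus L.

Lemma splitx (x : 'I_(n + n)) : (exists a, x = lshift n a) \/ (exists a, x = rshift n a).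
Proof. by rewrite -(splitK x); case: (split x) => a; [left|right]; exists a. Qed.

Lemma lr_neq (a b : 'I_n) : (lshift n a == rshift n b) = false.
Proof.
apply/negP => /eqP /(congr1 val) /= h; have := ltn_ord a; rewrite h.
by rewrite ltnNge leq_addr.
Qed.

Lemma mem_lsh_l (a : 'I_n) (W : {set 'I_n}) : (lshift n a \in lsh W) = (a \in W).
Proof. by rewrite /lsh mem_imset //; exact: lshift_inj. Qed.
Lemma mem_rsh_r (a : 'I_n) (W : {set 'I_n}) : (rshift n a \in rsh W) = (a \in W).
Proof. by rewrite /rsh mem_imset //; exact: rshift_inj. Qed.
Lemma mem_lsh_r (a : 'I_n) (W : {set 'I_n}) : (rshift n a \in lsh W) = false.
Proof. by apply/imsetP => -[b _ /eqP]; rewrite eq_sym lr_neq. Qed.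
Lemma mem_rsh_l (a : 'I_n) (W : {set 'I_n}) : (lshift n a \in rsh W) = false.
Proof. by apply/imsetP => -[b _ /eqP]; rewrite lr_neq. Qed.
Lemma mem_plus_l (a : 'I_n) (W : {set 'I_n}) : (lshift n a \in plus W) = (a \in W).
Proof. by rewrite /plus inE mem_lsh_l mem_rsh_l orbF. Qed.
Lemma mem_plus_r (a : 'I_n) (W : {set 'I_n}) : (rshift n a \in plus W) = (a \in W).
Proof. by rewrite /plus inE mem_lsh_r mem_rsh_r. Qed.

Lemma plusU (W1 W2 : {set 'I_n}) : plus (W1 :|: W2) = plus W1 :|: plus W2.
Proof. by rewrite /plus /lsh /rsh !imsetU setUACA. Qed.

Lemma plus_disj (W1 W2 : {set 'I_n}) : [disjoint W1 & W2] -> [disjoint plus W1 & plus W2].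
Proof.
move=> d; apply/disjP => x; case: (splitx x) => -[a ->];
  rewrite ?mem_plus_l ?mem_plus_r; exact: (disjP _ _ d).
Qed.

Lemma Sof_disj (E1 E2 : {set {set 'I_n}}) (L W : {set 'I_n}) : (forall e, e \in E1 -> [disjoint e & W]) ->
  (forall e, e \in E2 -> [disjoint e & W]) -> [disjoint L & W] ->
  [disjoint Sof E1 E2 L & plus W].
Proof.
move=> h1 h2 h3; apply/disjP => x; rewrite /Sof !inE.
case: (splitx x) => -[a ->];
  rewrite ?mem_lsh_l ?mem_lsh_r ?mem_rsh_l ?mem_rsh_r ?orbF /= => /orP [/orP [] | ].
- by case/bigcupP => e he; rewrite mem_lsh_l; exact: (disjP _ _ (h1 e he)).
- by case/bigcupP => e he; rewrite mem_rsh_l.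
- exact: (disjP _ _ h3).
- by case/bigcupP => e he; rewrite mem_lsh_r.
- by case/bigcupP => e he; rewrite mem_rsh_r; exact: (disjP _ _ (h2 e he)).
- exact: (disjP _ _ h3).
Qed.

Lemma SofU (E1a E1b E2a E2b : {set {set 'I_n}}) (La Lb : {set 'I_n}) :
  Sof (E1a :|: E1b) (E2a :|: E2b) (La :|: Lb) = Sof E1a E2a La :|: Sof E1b E2b Lb.
Proof.
rewrite /Sof !bigcup_setU plusU.
by rewrite [X in X :|: (plus La :|: _)]setUACA setUACA.
Qed.

Lemma dsjE (E1 E2 : {set {set 'I_n}}) (L : {set 'I_n}) (I : {set 'I_(n + n)}) : dsj E1 E2 L I = [disjoint Sof E1 E2 L & I].
Proof.
apply/idP/idP.
  case/and3P => /forall_inP h1 /forall_inP h2 h3; apply/disjP => x.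
  rewrite /Sof !in_setU => /orP [/orP [] | ].
  - by case/bigcupP => e he hx; exact: (disjP _ _ (h1 e he) x hx).
  - by case/bigcupP => e he hx; exact: (disjP _ _ (h2 e he) x hx).
  - by move=> hx; apply: (disjP _ _ h3 x); rewrite /plus in_setU.
move/disjP => h; apply/and3P; split.
- apply/forall_inP => e he; apply/disjP => x hx; apply: h.
  by rewrite /Sof !in_setU; apply/orP; left; apply/orP; left; apply/bigcupP; exists e.
- apply/forall_inP => e he; apply/disjP => x hx; apply: h.
  by rewrite /Sof !in_setU; apply/orP; left; apply/orP; right; apply/bigcupP; exists e.
- apply/disjP => x hx; apply: h.
  by move: hx; rewrite /Sof /plus !in_setU => ->; rewrite !orbT.
Qed.

Lemma innerE (E1 E2 : {set {set 'I_n}}) (L : {set 'I_n}) (T J : {set 'I_(n + n)}) :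
  \sum_(K in powerset T) (-1) ^+ #|K| * (dsj E1 E2 L (J :|: K))%:R
  = (dsj E1 E2 L J)%:R * (T \subset Sof E1 E2 L)%:R :> {mpoly int[4]}.
Proof.
under eq_bigr do rewrite dsjE disjUr.
rewrite dsjE.
transitivity (\sum_(K in powerset T | [disjoint Sof E1 E2 L & K])
                ([disjoint Sof E1 E2 L & J])%:R * (-1) ^+ #|K| : {mpoly int[4]}).
  rewrite big_mkcondr; apply: eq_bigr => K _.
  by case: [disjoint Sof E1 E2 L & K]; case: [disjoint Sof E1 E2 L & J];
     rewrite /= ?mulr1 ?mulr0 ?mul1r ?mul0r.
rewrite -mulr_sumr; congr (_ * _).
rewrite (eq_bigl (fun K => K \in powerset (T :\: Sof E1 E2 L))); last first.
  by move=> K; rewrite !powersetE subsetD disjoint_sym.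
by rewrite altsum setD_eq0.
Qed.

End S.



Section S3.
Variable n : nat.

Definition Hf (w : {set 'I_n} -> nat) (T J : {set 'I_(n + n)})
  (E1 E2 : {set {set 'I_n}}) (L : {set 'I_n}) : {mpoly int[4]} :=
  [disjoint E1 & E2]%:R * mon w E1 E2 L * (dsj E1 E2 L J)%:R *
  (T \subset Sof E1 E2 L)%:R.

Lemma FsumE (E : {set {set 'I_n}}) w (W : {set 'I_n}) T J :
  Fsum E w W T J = \sum_(E1 in powerset (delta E W))
     \sum_(E2 in powerset (delta E W)) \sum_(L in powerset W) Hf w T J E1 E2 L.
Proof.
rewrite /Fsum; apply: eq_bigr => E1 _; rewrite big_mkcondr /=.
apply: eq_bigr => E2 _; rewrite /Hf; case: ifP => d.
  by apply: eq_bigr => L _; rewrite innerE /= mul1r !mulrA.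
by rewrite big1 // => L _; rewrite /= !mul0r.
Qed.

Lemma deltaU (E : {set {set 'I_n}}) (W1 W2 : {set 'I_n}) :
  delta E (W1 :|: W2) = delta E W1 :|: delta E W2.
Proof.
by apply/setP => e; rewrite !inE setIUr setU_eq0 negb_and andb_orr.
Qed.

Lemma sum_setU_disj (T : finType) (A B : {set T}) (F : T -> nat) :
  [disjoint A & B] -> (\sum_(i in A :|: B) F i = \sum_(i in A) F i + \sum_(i in B) F i)%N.
Proof.
move=> d; rewrite -bigU //; apply: eq_bigl => i; rewrite !inE; reflexivity.
Qed.

Lemma subU_disj (T : finType) (A B C : {set T}) :
  [disjoint A & C] -> (A \subset B :|: C) = (A \subset B).
Proof.
move=> d; apply/idP/idP => h; last exact: subset_trans h (subsetUl _ _).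
apply/subsetP => x xA; have := subsetP h x xA; rewrite inE => /orP [//|xC].
by case: (disjP _ _ d x xA xC).
Qed.

Lemma rearr (R : comRingType) (a b c d e f x1 x2 y1 y2 z1 z2 u1 u2 : R) :
  (a*b) * (x1*x2 * (y1*y2) * (z1*z2) * (u1*u2)) * (c*d) * (e*f) =
  a * (x1*y1*z1*u1) * c * e * (b * (x2*y2*z2*u2) * d * f).
Proof. ring. Qed.

Lemma Hf_mul w J (W1 W2 : {set 'I_n}) (D1 D2 E1a E1b E2a E2b : {set {set 'I_n}})
  (La Lb : {set 'I_n}) :
  [disjoint D1 & D2] -> E1a \subset D1 -> E2a \subset D1 ->
  E1b \subset D2 -> E2b \subset D2 -> [disjoint La & Lb] ->
  [disjoint Sof E1a E2a La & plus W2] -> [disjoint Sof E1b E2b Lb & plus W1] ->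
  Hf w (plus W1 :|: plus W2) J (E1a :|: E1b) (E2a :|: E2b) (La :|: Lb) =
  Hf w (plus W1) J E1a E2a La * Hf w (plus W2) J E1b E2b Lb.
Proof.
move=> dD h1a h2a h1b h2b dL dSa dSb.
have dab (X Y : {set {set 'I_n}}) : X \subset D1 -> Y \subset D2 -> [disjoint X & Y].
  by move=> hX hY; exact: disjointWl hX (disjointWr hY dD).
rewrite /Hf /mon.
rewrite disjUl !disjUr (dab E1a E2b) // [[disjoint E1b & E2a]]disjoint_sym (dab E2a E1b) //.
rewrite !andbT.
rewrite !cardsU (disjoint_setI0 (dab _ _ h1a h1b)) (disjoint_setI0 (dab _ _ h2a h2b)).
rewrite (disjoint_setI0 dL) !cards0 !subn0.
rewrite /wsum setUACA sum_setU_disj; last first.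
  by rewrite disjUl !disjUr !dab.
rewrite dsjE SofU disjUl -!dsjE.
rewrite andTb subUset.
rewrite (subU_disj _ (_ : [disjoint plus W1 & Sof E1b E2b Lb])); last by rewrite disjoint_sym.
rewrite [Sof E1a E2a La :|: _]setUC.
rewrite (subU_disj _ (_ : [disjoint plus W2 & Sof E1a E2a La])); last by rewrite disjoint_sym.
rewrite -!mulnb !natrM !exprD.
exact: rearr.
Qed.

Lemma Fsum_mul (E : {set {set 'I_n}}) w (W1 W2 : {set 'I_n}) J :
  [disjoint W1 & W2] ->
  (forall e, e \in E -> e :&: W1 != set0 -> [disjoint e & W2]) ->
  (forall e, e \in E -> e :&: W2 != set0 -> [disjoint e & W1]) ->
  Fsum E w (W1 :|: W2) (plus (W1 :|: W2)) J =
  Fsum E w W1 (plus W1) J * Fsum E w W2 (plus W2) J.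
Proof.
move=> dW h1 h2.
have dD : [disjoint delta E W1 & delta E W2].
  apply/disjP => e; rewrite !inE => /andP [eE ne1] /andP [_ ne2].
  by move: (h1 e eE ne1); rewrite -setI_eq0 (negbTE ne2).
have eD1 e : e \in delta E W1 -> [disjoint e & W2].
  by rewrite inE => /andP [eE ne]; apply: h1.
have eD2 e : e \in delta E W2 -> [disjoint e & W1].
  by rewrite inE => /andP [eE ne]; apply: h2.
rewrite !FsumE deltaU plusU.
rewrite sum_powU // mulr_suml; apply: eq_bigr => E1a; rewrite powersetE => hE1a.
rewrite mulr_sumr; apply: eq_bigr => E1b; rewrite powersetE => hE1b.
rewrite sum_powU // mulr_suml; apply: eq_bigr => E2a; rewrite powersetE => hE2a.
rewrite mulr_sumr; apply: eq_bigr => E2b; rewrite powersetE => hE2b.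
rewrite sum_powU ?mulr_suml; last exact: dW.
apply: eq_bigr => La; rewrite powersetE => hLa.
rewrite mulr_sumr; apply: eq_bigr => Lb; rewrite powersetE => hLb.
apply: (@Hf_mul w J W1 W2 (delta E W1) (delta E W2)) => //.
- exact: disjointWl hLa (disjointWr hLb dW).
- apply: Sof_disj.
  + by move=> e he; apply: eD1; apply: (subsetP hE1a).
  + by move=> e he; apply: eD1; apply: (subsetP hE2a).
  + exact: disjointWl hLa dW.
- apply: Sof_disj.
  + by move=> e he; apply: eD2; apply: (subsetP hE1b).
  + by move=> e he; apply: eD2; apply: (subsetP hE2b).
  + by apply: disjointWl hLb _; rewrite disjoint_sym.
Qed.

End S3.



Section T.
Variable n : nat.
Variable p : 'I_n -> 'I_n.
Variable r : 'I_n.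
Hypothesis pr : p r = r.
Hypothesis hr : forall u, connect (frel p) u r.

Lemma ancP a u : reflect (exists k, iter k p u = a) (anc p a u).
Proof.
apply: (iffP idP) => [h|[k <-]]; last exact: fconnect_iter.
by exists (findex p u a); apply: iter_findex.
Qed.

Lemma iter_fix k : iter k p r = r.
Proof. by elim: k => //= k ->. Qed.

Lemma anc_antisym a b : anc p a b -> anc p b a -> a = b.
Proof.
move=> /ancP [i hi] /ancP [j hj].
have hb : iter (j + i) p b = b by rewrite iterD hi hj.
case: (posnP (j + i)) => [/eqP|m0].
  by rewrite addn_eq0 => /andP [_ /eqP i0]; move: hi; rewrite i0.
have hm t : iter (t * (j + i)) p b = b.
  by elim: t => // t IH; rewrite mulSn iterD IH hb.
have [k hk] := ancP _ _ (hr b).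
have br : b = r.
  have kle : (k <= k * (j + i))%N by rewrite leq_pmulr.
  by rewrite -(hm k) -(subnK kle) iterD hk iter_fix.
by rewrite -hi br iter_fix.
Qed.

Lemma anc_trans a b c : anc p a b -> anc p b c -> anc p a c.
Proof. by move=> h1 h2; apply: connect_trans h2 h1. Qed.

Lemma anc_p a b : anc p a b -> a != b -> anc p a (p b).
Proof.
move=> /ancP [[|i] hi] ne; first by move: ne; rewrite -hi eqxx.
by apply/ancP; exists i; rewrite -iterSr.
Qed.

Lemma anc_lin a b u : anc p a u -> anc p b u -> anc p a b || anc p b a.
Proof.
move=> /ancP [i <-] /ancP [j <-].
case: (leqP i j) => h.
  by apply/orP; right; apply/ancP; exists (j - i)%N; rewrite -iterD subnK.
by apply/orP; left; apply/ancP; exists (i - j)%N; rewrite -iterD subnK // ltnW.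
Qed.

Lemma anc_parent c : anc p (p c) c.
Proof. by apply: connect1; rewrite /= eqxx. Qed.

Lemma notanc v c1 c2 : c1 \in children p v -> c2 \in children p v -> c1 != c2 ->
  ~~ anc p c1 c2.
Proof.
rewrite !inE => /andP [/eqP h1 n1] /andP [/eqP h2 n2] ne; apply/negP => h.
have := anc_p h ne; rewrite h2 => h'.
have hv : anc p v c1 by rewrite -h1; apply: anc_parent.
have e := anc_antisym h' hv.
by move: n1; rewrite e eqxx.
Qed.

Lemma T1 v c1 c2 : c1 \in children p v -> c2 \in children p v -> c1 != c2 ->
  [disjoint treec p c1 & treec p c2].
Proof.
move=> h1 h2 ne; apply/disjP => x; rewrite !inE => a1 a2.
case/orP: (anc_lin a1 a2) => h.
  by move: (notanc h1 h2 ne); rewrite h.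
have ne' : c2 != c1 by rewrite eq_sym.
by move: (notanc h2 h1 ne'); rewrite h.
Qed.

Lemma T2 (E : {set {set 'I_n}}) v c1 c2 : simple_graph E ->
  (forall a b : 'I_n, [set a; b] \in E -> anc p a b || anc p b a) ->
  c1 \in children p v -> c2 \in children p v -> c1 != c2 ->
  forall e, e \in E -> e :&: treec p c1 != set0 -> [disjoint e & treec p c2].
Proof.
move=> sg el h1 h2 ne e eE /set0Pn [a]; rewrite inE => /andP [ae a1].
apply/disjP => b be b2.
have dj := disjP _ _ (T1 h1 h2 ne).
have ab : a != b by apply/eqP => eab; apply: (dj a a1); rewrite eab.
have eab : e = [set a; b].
  apply/eqP; rewrite eq_sym eqEcard cards2 ab (sg e eE) leqnn andbT.
  by apply/subsetP => x; rewrite !inE => /orP [] /eqP ->.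
move: a1 b2; rewrite !inE => a1 b2.
rewrite eab in eE; case/orP: (el a b eE) => h.
  by apply: (dj b); rewrite inE //; apply: anc_trans a1 h.
by apply: (dj a); rewrite inE //; apply: anc_trans b2 h.
Qed.

Lemma T3 v : treeo p v = \bigcup_(c in children p v) treec p c.
Proof.
apply/setP => u; rewrite !inE; apply/idP/bigcupP.
  case/andP => nuv /ancP ex.
  have ex' : exists k, iter k p u == v by case: ex => k hk; exists k; rewrite hk.
  case: (ex_minnP ex') => m /eqP hm hmin.
  have m0 : (0 < m)%N by case: m hm hmin => //= hm; rewrite hm eqxx in nuv.
  exists (iter m.-1 p u).
    rewrite inE -iterS prednK // hm eqxx /=.
    apply/negP => /eqP hc; have := hmin m.-1; rewrite hc eqxx => /(_ isT).
    by rewrite -ltnS prednK // ltnn.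
  by rewrite inE; apply: fconnect_iter.
move=> [c]; rewrite !inE => /andP [/eqP pc ncv] cu.
apply/andP; split; last by apply: anc_trans cu; rewrite -pc; apply: anc_parent.
apply/negP => /eqP uv; move: cu; rewrite uv => cv.
have hv : anc p v c by rewrite -pc; apply: anc_parent.
have e := anc_antisym cv hv.
by move: ncv; rewrite e eqxx.
Qed.

End T.



Lemma Fsum0 n (E : {set {set 'I_n}}) w J : Fsum E w set0 (plus set0) J = 1.
Proof.
have d0 : delta E set0 = set0 by apply/setP => e; rewrite !inE setI0 eqxx andbF.
have S0 : Sof (set0 : {set {set 'I_n}}) set0 set0 = set0.
  by rewrite /Sof /plus /lsh /rsh !big_set0 !imset0 !setU0.
have p0 : plus (set0 : {set 'I_n}) = set0 by rewrite /plus /lsh /rsh !imset0 setU0.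
rewrite FsumE d0 powerset0 big_set1 powerset0 big_set1 big_set1 /Hf /mon dsjE S0 p0 sub0set.
rewrite -setI_eq0 setI0 eqxx -setI_eq0 set0I eqxx !cards0 /wsum setU0 big_set0.
by rewrite !expr0 !mulr1.
Qed.

Lemma prod_seq n (E : {set {set 'I_n}}) w p r v J : p r = r ->
  (forall u, connect (frel p) u r) -> simple_graph E ->
  (forall a b : 'I_n, [set a; b] \in E -> anc p a b || anc p b a) ->
  forall s, uniq s -> {subset s <= children p v} ->
  \prod_(u <- s) Pv E w p u J =
  Fsum E w (\bigcup_(u <- s) treec p u) (plus (\bigcup_(u <- s) treec p u)) J.
Proof.
move=> pr hr sg el; elim => [|c s IH] /=.
  by move=> _ _; rewrite !big_nil Fsum0.
case/andP => cns us hs.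
have hc : c \in children p v by apply: hs; rewrite inE eqxx.
have hs' : {subset s <= children p v} by move=> x xs; apply: hs; rewrite inE xs orbT.
rewrite !big_cons IH // /Pv Fsum_mul //.
- apply/disjP => x x1; rewrite bigcup_seq => /bigcupP [u us' xu].
  have ne : c != u by apply/eqP => cu; rewrite cu us' in cns.
  exact: (disjP _ _ (T1 pr hr hc (hs' u us') ne) x x1 xu).
- move=> e eE ne; apply/disjP => x xe; rewrite bigcup_seq => /bigcupP [u us' xu].
  have ne' : c != u by apply/eqP => cu; rewrite cu us' in cns.
  exact: (disjP _ _ (T2 pr hr sg el hc (hs' u us') ne' eE ne) x xe xu).
- move=> e eE /set0Pn [x]; rewrite inE => /andP [xe].
  rewrite bigcup_seq => /bigcupP [u us' xu].
  have ne' : u != c by apply/eqP => cu; rewrite -cu us' in cns.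
  apply: (T2 pr hr sg el (hs' u us') hc ne' eE).
  by apply/set0Pn; exists x; rewrite inE xe xu.
Qed.

End Aux.
Import Aux.

Theorem lemma5 (n N : nat) (E : {set {set 'I_n}}) (w : {set 'I_n} -> nat)
  (p : 'I_n -> 'I_n) (r : 'I_n) (v : 'I_n) (J' : {set 'I_(n + n)}) :
  simple_graph E ->
  graph_connected E ->
  (forall e, e \in E -> (1 <= w e <= N)%N) ->
  elimination_tree E p r ->
  children p v != set0 ->
  J' \subset plus (tailc p v) ->
  Qv E w p v J' = \prod_(u in children p v) Pv E w p u J'.
Proof.
move=> sg _ _ [[pr hr] el] _ _.
have e1 : treeo p v = \bigcup_(u <- enum (children p v)) treec p u.
  by rewrite big_enum (T3 pr hr).
have e2 : \prod_(u in children p v) Pv E w p u J' =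
          \prod_(u <- enum (children p v)) Pv E w p u J' by rewrite big_enum.
rewrite /Qv e1 e2 (@prod_seq n E w p r v J' pr hr sg el) ?enum_uniq //.
by move=> x; rewrite mem_enum.
Qed.
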